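(* Let $X \subset \mathbb{R}^n$ be a compact real algebraic set. Then the topological disjoint union $X \sqcup X$ is a boundary; that is, there exist a real algebraic set $W \subset \mathbb{R}^m$ (for some $m$) and a point $w \in W$ such that $X \sqcup X$ is homeomorphic to the link $\operatorname{lk}(w,W)$.
   Context: All algebraic sets are algebraic subsets of real affine space $\mathbb{R}^m$. For a semialgebraic set $W \subset \mathbb{R}^m$ and $w \in W$, let $S(w,\varepsilon)$ denote the sphere of radius $\varepsilon>0$ in $\mathbb{R}^m$ centered at $w$. By the local conic structure lemma, for all sufficiently small $\varepsilon>0$ the topological type of $S(w,\varepsilon)\cap W$ is independent of $\varepsilon$; this space is called the link of $w$ in $W$ and denoted $\operatorname{lk}(w,W)$. A compact real algebraic set $X$ is called a boundary if there exist a real algebraic set $W$ and a point $w\in W$ such that $X$ is homeomorphic to $\operatorname{lk}(w,W)$. *)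

(* Defs.v *)
From HB Require Import structures.
From mathcomp Require Import all_boot all_order all_algebra.
From mathcomp Require Import all_classical all_reals all_analysis.
From mathcomp Require mpoly.
Set Implicit Arguments. Unset Strict Implicit. Unset Printing Implicit Defensive.
Import Order.TTheory GRing.Theory Num.Theory.
Import numFieldNormedType.Exports.
Local Open Scope classical_set_scope.
Local Open Scope ring_scope.

Definition coords (R : realType) (n : nat) (x : 'rV[R]_n) : 'I_n -> R :=
  fun i => x ord0 i.

Definition is_algebraic_set (R : realType) (n : nat) (X : set 'rV[R]_n) : Prop :=
  exists (k : nat) (ps : 'I_k -> mpoly.mpoly n R),
    X = [set x | forall j : 'I_k, mpoly.meval (coords x) (ps j) = 0].

Definition sphere (R : realType) (m : nat) (w : 'rV[R]_m) (eps : R) : set 'rV[R]_m :=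
  [set x | \sum_(i < m) (x ord0 i - w ord0 i) ^+ 2 = eps ^+ 2].

Definition homeomorphic (R : realType) (a b : nat)
  (A : set 'rV[R]_a) (B : set 'rV[R]_b) : Prop :=
  exists (f : 'rV[R]_a -> 'rV[R]_b) (g : 'rV[R]_b -> 'rV[R]_a),
    [/\ (forall x, A x -> B (f x)), (forall y, B y -> A (g y)),
        (forall x, A x -> g (f x) = x) & (forall y, B y -> f (g y) = y)] /\
    ({within A, continuous f} /\ {within B, continuous g}).

(* The topological disjoint union X ⊔ X, realised inside R^(n+1) as X × {0,1}. *)
Definition disjoint_union_self (R : realType) (n : nat) (X : set 'rV[R]_n)
  : set 'rV[R]_(n + 1) :=
  [set z | X (lsubmx z) /\ (rsubmx z = 0 \/ rsubmx z = const_mx 1)].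

(* Y is homeomorphic to the link lk(w, W): for all sufficiently small eps > 0,
   S(w, eps) ∩ W is homeomorphic to Y. *)
Definition homeomorphic_to_link (R : realType) (k m : nat) (Y : set 'rV[R]_k)
  (W : set 'rV[R]_m) (w : 'rV[R]_m) : Prop :=
  exists2 eps0 : R, 0 < eps0 &
    forall eps : R, 0 < eps -> eps < eps0 -> homeomorphic Y (sphere w eps `&` W).

Definition is_boundary (R : realType) (k : nat) (Y : set 'rV[R]_k) : Prop :=
  exists (m : nat) (W : set 'rV[R]_m) (w : 'rV[R]_m),
    [/\ is_algebraic_set W, W w & homeomorphic_to_link Y W w].

(* Main.v *)
Require Import Defs.
From HB Require Import structures.
From mathcomp Require Import all_boot all_order all_algebra.
From mathcomp Require mpoly.
From mathcomp Require Import ring.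

Module PolyKit.
Import mpoly.
Import GRing.Theory.
Local Open Scope ring_scope.

Section Homog.
Variables (R : fieldType) (n m : nat) (iy : 'I_n -> 'I_m) (iu : 'I_m).

Definition HQ (p : {mpoly R[n]}) := exists (D : nat) (P : {mpoly R[m]}),
  forall v : 'I_m -> R, v iu != 0 ->
    meval v P = v iu ^+ D * meval (fun i => v (iy i) / v iu) p.

Lemma HQD p q : HQ p -> HQ q -> HQ (p + q).
Proof.
move=> [D1 [P1 H1]] [D2 [P2 H2]].
exists (D1 + D2)%N, (P1 * 'X_iu ^+ D2 + P2 * 'X_iu ^+ D1) => v hv.
rewrite !mevalD !mevalM !rmorphXn /= mevalXU H1 // H2 //.
rewrite exprD; ring.
Qed.

Lemma HQM p q : HQ p -> HQ q -> HQ (p * q).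
Proof.
move=> [D1 [P1 H1]] [D2 [P2 H2]].
exists (D1 + D2)%N, (P1 * P2) => v hv.
rewrite !mevalM H1 // H2 // exprD; ring.
Qed.

Lemma HQC c : HQ c%:MP.
Proof. by exists 0%N, c%:MP => v hv; rewrite !mevalC expr0 mul1r. Qed.

Lemma HQX i : HQ 'X_i.
Proof.
exists 1%N, 'X_(iy i) => v hv.
by rewrite !mevalXU expr1 mulrC divfK.
Qed.

Lemma homogenize p : HQ p.
Proof.
rewrite (mpolyE p); elim/big_rec: _ => [|mm q _ Hq].
  by have := HQC 0; rewrite mpolyC0.
apply: HQD => //; rewrite -mul_mpolyC; apply: HQM; first exact: HQC.
rewrite mpolyXE_id; elim/big_rec: _ => [|i r _ Hr].
  by have := HQC 1; rewrite mpolyC1.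
apply: HQM => //; elim: (mm i) => [|k IH]; first by have := HQC 1; rewrite mpolyC1 expr0.
by rewrite exprS; apply: HQM => //; apply: HQX.
Qed.

Definition Qp (P : {mpoly R[m]}) : {mpoly R[m]} := P * 'X_iu.
Lemma mevalQp v P : meval v (Qp P) = meval v P * v iu.
Proof. by rewrite /Qp mevalM mevalXU. Qed.

Definition Bdp (ir : 'I_m) : {mpoly R[m]} :=
  \sum_(i < n) 'X_(iy i) ^+ 2 + 'X_ir ^+ 2 + 'X_iu ^+ 2 - 'X_iu.
Lemma mevalBdp v ir : meval v (Bdp ir) =
  \sum_(i < n) v (iy i) ^+ 2 + v ir ^+ 2 + v iu ^+ 2 - v iu.
Proof.
rewrite /Bdp mevalB !mevalD !rmorphXn /= !mevalXU raddf_sum /=.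
by congr (_ + _ + _ - _); apply: eq_bigr => i _; rewrite rmorphXn /= mevalXU.
Qed.
End Homog.
Arguments Qp {R m} iu P.
Arguments mevalQp {R m iu} v P.
Arguments Bdp {R n m} iy iu ir.
Arguments mevalBdp {R n m iy iu} v ir.
Arguments homogenize {R n m} iy iu p.
End PolyKit.

From mathcomp Require Import all_classical all_reals all_analysis.
From mathcomp Require Import lra.
Import numFieldNormedType.Exports.
Import Order.TTheory GRing.Theory Num.Theory.
Local Open Scope classical_set_scope.
Local Open Scope ring_scope.

Section Kit.
Variable R : realType.

Lemma mx_cont (T : topologicalType) m n (F : T -> 'M[R]_(m,n)) :
  (forall i j, continuous (fun t => F t i j)) -> continuous F.
Proof.
move=> hF x; apply/cvg_mx_entourageP => A entA.
apply: filter_forall => i; apply: filter_forall => j.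
have H := cvg_entourage (hF i j x) entA.
rewrite near_simpl; near=> t; rewrite inE; near: t; exact: H.
Unshelve. all: by end_near.
Qed.

Variable T : topologicalType.
Implicit Types f g : T -> R.

Lemma cK (c : R) : continuous (fun _ : T => c).
Proof. exact: cst_continuous. Qed.
Lemma cD f g : continuous f -> continuous g -> continuous (fun t => f t + g t).
Proof. move=> hf hg x; exact: (continuousD (hf x) (hg x)). Qed.
Lemma cM f g : continuous f -> continuous g -> continuous (fun t => f t * g t).
Proof. move=> hf hg x; exact: (continuousM (hf x) (hg x)). Qed.
Lemma cN f : continuous f -> continuous (fun t => - f t).
Proof. move=> hf x; exact: (continuousN (hf x)). Qed.
Lemma cS f : continuous f -> continuous (fun t => Num.sqrt (f t)).
Proof. by move=> hf x; apply: continuous_comp; [exact: hf | exact: sqrt_continuous]. Qed.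
Lemma cMax f g : continuous f -> continuous g -> continuous (fun t => Num.max (f t) (g t)).
Proof. move=> hf hg x; exact: (continuous_max (hf x) (hg x)). Qed.
Lemma cMin f g : continuous f -> continuous g -> continuous (fun t => Num.min (f t) (g t)).
Proof. move=> hf hg x; exact: (continuous_min (hf x) (hg x)). Qed.
Lemma cSum (I : Type) (s : seq I) (P : pred I) (F : I -> T -> R) :
  (forall i, continuous (F i)) -> continuous (fun t => \sum_(i <- s | P i) F i t).
Proof.
move=> hF; elim: s => [|i s IH].
  by rewrite (_ : (fun t => _) = (fun _ => 0)); [exact: cK | apply: funext => t; rewrite big_nil].
case hP: (P i).
  rewrite (_ : (fun t => _) = (fun t => F i t + \sum_(j <- s | P j) F j t)); first exact: cD.
  by apply: funext => t; rewrite big_cons hP.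
by rewrite (_ : (fun t => _) = (fun t => \sum_(j <- s | P j) F j t)) //; apply: funext => t; rewrite big_cons hP.
Qed.

Lemma cRow m n1 n2 (A : T -> 'M[R]_(m, n1)) (B : T -> 'M[R]_(m, n2)) :
  continuous A -> continuous B -> continuous (fun t => row_mx (A t) (B t)).
Proof.
move=> hA hB; apply: mx_cont => i k; rewrite -(splitK k); case: (fintype.split k) => k' /=.
  rewrite (_ : (fun t => _) = (fun t => A t i k')); last by apply: funext => t; rewrite row_mxEl.
  by move=> x; apply: (@continuous_comp _ _ _ A (fun M => M i k')); [exact: hA | exact: coord_continuous].
rewrite (_ : (fun t => _) = (fun t => B t i k')); last by apply: funext => t; rewrite row_mxEr.
by move=> x; apply: (@continuous_comp _ _ _ B (fun M => M i k')); [exact: hB | exact: coord_continuous].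
Qed.

Lemma cConst m n f : continuous f -> continuous (fun t => const_mx (f t) : 'M[R]_(m, n)).
Proof.
move=> hf; apply: mx_cont => i k.
by rewrite (_ : (fun t => _) = f) //; apply: funext => t; rewrite mxE.
Qed.

Lemma cScale m n (c : R) (A : T -> 'M[R]_(m, n)) :
  continuous A -> continuous (fun t => c *: A t).
Proof. by move=> hA x; apply: continuousZ; [exact: cK | exact: hA]. Qed.

Lemma cX2 f : continuous f -> continuous (fun t => f t ^+ 2).
Proof.
move=> hf; rewrite (_ : (fun t => _) = (fun t => f t * f t)); first exact: cM.
by apply: funext => t; rewrite expr2.
Qed.

Lemma cCoord m n (A : T -> 'M[R]_(m, n)) i j :
  continuous A -> continuous (fun t => A t i j).
Proof.
by move=> hA x; apply: (@continuous_comp _ _ _ A (fun M => M i j)); [exact: hA | exact: coord_continuous].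
Qed.

End Kit.

Definition nrm2 (R : realType) k (x : 'rV[R]_k) := \sum_(i < k) x ord0 i ^+ 2.
Arguments nrm2 {R k}.

Section Main.
Variables (R : realType) (n : nat).

Definition iy (i : 'I_n) : 'I_(n+1+1) := lshift 1 (lshift 1 i).
Definition iu : 'I_(n+1+1) := lshift 1 (rshift n ord0).
Definition ir : 'I_(n+1+1) := rshift (n+1) ord0.
Definition zY (z : 'rV[R]_(n+1+1)) : 'rV[R]_n := lsubmx (lsubmx z).
Definition zU (z : 'rV[R]_(n+1+1)) := rsubmx (lsubmx z) ord0 ord0.
Definition zR (z : 'rV[R]_(n+1+1)) := rsubmx z ord0 ord0.

Lemma coords_iy (z : 'rV[R]_(n+1+1)) i : coords z (iy i) = zY z ord0 i.
Proof. by rewrite /coords /zY !mxE. Qed.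
Lemma coords_iu (z : 'rV[R]_(n+1+1)) : coords z iu = zU z.
Proof. by rewrite /coords /zU !mxE. Qed.
Lemma coords_ir (z : 'rV[R]_(n+1+1)) : coords z ir = zR z.
Proof. by rewrite /coords /zR !mxE. Qed.

Lemma sumsplit (z : 'rV[R]_(n+1+1)) : \sum_(i < n+1+1) (z ord0 i - (0:'rV[R]_(n+1+1)) ord0 i) ^+ 2
  = nrm2 (zY z) + zU z ^+ 2 + zR z ^+ 2.
Proof.
rewrite (eq_bigr (fun i => z ord0 i ^+ 2)); last by move=> i _; rewrite mxE subr0.
rewrite big_split_ord big_split_ord /= !big_ord1 /nrm2 /zY /zU /zR !mxE.
by congr (_ + _ + _); apply: eq_bigr => i _; rewrite !mxE.
Qed.

Lemma nrm2Z k (c : R) (x : 'rV[R]_k) : nrm2 (c *: x) = c ^+ 2 * nrm2 x.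
Proof. by rewrite /nrm2 mulr_sumr; apply: eq_bigr => i _; rewrite mxE exprMn. Qed.

Lemma nrm2_ge0 k (x : 'rV[R]_k) : 0 <= nrm2 x.
Proof. by apply: sumr_ge0 => i _; apply: sqr_ge0. Qed.

Lemma bound_compact (X : set 'rV[R]_n) : compact X ->
  exists K : R, 0 <= K /\ forall x, X x -> nrm2 x <= K.
Proof.
move=> hc; have [M0 [_ HM]] := compact_bounded hc.
pose M := `|M0| + 1.
have HX : forall x, X x -> `|x| <= M.
  move=> x Xx; apply: (HM M) => //; rewrite /M.
  by apply: (le_lt_trans (ler_norm M0)); rewrite ltrDl.
exists (n%:R * M ^+ 2); split; first by rewrite mulr_ge0 // sqr_ge0.
move=> x Xx; rewrite /nrm2.
apply: (le_trans (y := \sum_(i < n) M ^+ 2)).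
  apply: ler_sum => i _.
  have hi : `|x ord0 i| <= M.
    apply: le_trans (HX x Xx).
    have -> : `|x| = mx_norm x by [].
    rewrite mx_normrE; exact: (le_trans _ (le_bigmax _ _ (ord0, i))).
  rewrite -[x ord0 i ^+ 2]ger0_norm ?sqr_ge0 // normrX.
  by rewrite lerXn2r // nnegrE (le_trans _ hi).
by rewrite sumr_const card_ord mulr_natl.
Qed.
End Main.

Arguments zY {R n}.
Arguments zU {R n}.
Arguments zR {R n}.
Arguments iy {n}.
Arguments iu {n}.
Arguments ir {n}.
Arguments bound_compact {R n X}.
Arguments sumsplit {R n}.
Arguments coords_iy {R n}.
Arguments coords_iu {R n}.
Arguments coords_ir {R n}.
Arguments nrm2Z {R k}.
Arguments nrm2_ge0 {R k}.

Theorem proposition4p1 (R : realType) (n : nat) (X : set 'rV[R]_n) :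
  is_algebraic_set X -> compact X -> is_boundary (disjoint_union_self X).
Proof.
move=> [k [ps hX]] hc.
have [K [K0 hK]] := bound_compact hc.
have /choice [DP hDP] : forall j : 'I_k, exists DP : nat * mpoly.mpoly (n+1+1) R,
   forall v : 'I_(n+1+1) -> R, v iu != 0 ->
     mpoly.meval v DP.2 = v iu ^+ DP.1 * mpoly.meval (fun i => v (iy i) / v iu) (ps j).
  by move=> j; have [D [P HP]] := PolyKit.homogenize (@iy n) iu (ps j); exists (D, P).
pose ps' : 'I_k.+1 -> mpoly.mpoly (n+1+1) R := fun j =>
  if unlift ord0 j is Some j' then PolyKit.Qp iu (DP j').2 else PolyKit.Bdp (@iy n) iu ir.
pose W := [set z : 'rV[R]_(n+1+1) | forall j, mpoly.meval (coords z) (ps' j) = 0].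
have evQ : forall (z : 'rV[R]_(n+1+1)) j, zU z != 0 ->
   mpoly.meval (coords z) (PolyKit.Qp iu (DP j).2) =
   zU z ^+ (DP j).1 * mpoly.meval (coords ((zU z)^-1 *: zY z)) (ps j) * zU z.
  move=> z j hz; rewrite PolyKit.mevalQp coords_iu hDP; last by rewrite coords_iu.
  rewrite !coords_iu.
  congr (_ * _ * _); apply: mpoly.meval_eq => i.
  by rewrite coords_iy /coords [in RHS]mxE mulrC.
have evB : forall z : 'rV[R]_(n+1+1),
    mpoly.meval (coords z) (PolyKit.Bdp (@iy n) iu ir) =
    nrm2 (zY z) + zR z ^+ 2 + zU z ^+ 2 - zU z.
  move=> z; rewrite PolyKit.mevalBdp coords_ir coords_iu; congr (_ + _ + _ - _).
  by apply: eq_bigr => i _; rewrite coords_iy.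
have memW : forall z, W z <-> (nrm2 (zY z) + zR z ^+ 2 + zU z ^+ 2 - zU z = 0 /\
    forall j, mpoly.meval (coords z) (PolyKit.Qp iu (DP j).2) = 0).
  move=> z; split.
    move=> Wz; split; first by have := Wz ord0; rewrite /ps' unlift_none evB.
    by move=> j; have := Wz (lift ord0 j); rewrite /ps' liftK.
  move=> [hB hQ] j; rewrite /ps'; case: unliftP => [j'|] _ //.
  by rewrite evB.
have Xc : forall x, X x <-> forall j, mpoly.meval (coords x) (ps j) = 0.
  by move=> x; rewrite hX.
exists (n+1+1)%N, W, 0; split.
- by exists k.+1, ps'.
- move=> j; rewrite /ps'; case: unliftP => [j'|] _.
    by rewrite PolyKit.mevalQp coords_iu /zU !mxE mulr0.
  rewrite evB /nrm2 big1 => [|i _]; last by rewrite /zY !mxE expr0n.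
  by rewrite /zR /zU !mxE expr0n /= add0r addr0 subr0.
have K1 : 0 < 2 * (K + 1) by rewrite mulr_gt0 // ltr_pwDr.
exists ((2 * (K + 1))^-1); first by rewrite invr_gt0.
move=> eps he he0.
set a := eps ^+ 2.
have a0 : 0 < a by exact: exprn_gt0.
have aK : a * (K + 2) <= 1.
  move: he0; rewrite -[X in _ < X]div1r ltr_pdivlMr // => he1.
  rewrite /a; nra.
pose beta (r : R) := (1 - Num.max (-1) (Num.min 1 (r / a))) / 2.
have betaP : forall r, a <= `|r| -> (0 <= r -> beta r = 0) /\ (r < 0 -> beta r = 1).
  move=> r hr; split => hr0.
    rewrite ger0_norm // in hr.
    have h1 : 1 <= r / a by rewrite ler_pdivlMr // mul1r.
    by rewrite /beta min_l // max_r ?lerN10 // subrr mul0r.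
  rewrite ltr0_norm // in hr.
  have h1 : r / a <= -1 by rewrite ler_pdivrMr // mulN1r lerNr.
  rewrite /beta min_r ?(le_trans h1) ?lerN10 // max_l //.
  by rewrite opprK -[1 + 1]/2%:R divff // pnatr_eq0.
pose rho (x : 'rV[R]_n) := a - a ^+ 2 - a ^+ 2 * nrm2 x.
have rhoa : forall x, X x -> a ^+ 2 <= rho x.
  move=> x Xx; have := hK x Xx; have := nrm2_ge0 x; rewrite /rho => h1 h2; nra.
have sqa : forall x, X x -> a <= Num.sqrt (rho x).
  move=> x Xx; rewrite -(ger0_norm (ltW a0)) -sqrtr_sqr ler_sqrt ?rhoa //.
  exact: le_trans (sqr_ge0 a) (rhoa x Xx).
pose f (z : 'rV[R]_(n+1)) : 'rV[R]_(n+1+1) :=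
  row_mx (row_mx (a *: lsubmx z) (const_mx a))
         (const_mx ((1 - 2 * rsubmx z ord0 ord0) * Num.sqrt (rho (lsubmx z)))).
pose g (w : 'rV[R]_(n+1+1)) : 'rV[R]_(n+1) :=
  row_mx (a^-1 *: zY w) (const_mx (beta (zR w))).
have fY z : zY (f z) = a *: lsubmx z by rewrite /zY /f !row_mxKl.
have fU z : zU (f z) = a by rewrite /zU /f row_mxKl row_mxKr mxE.
have fR z : zR (f z) = (1 - 2 * rsubmx z ord0 ord0) * Num.sqrt (rho (lsubmx z)).
  by rewrite /zR /f row_mxKr mxE.
have gL w : lsubmx (g w) = a^-1 *: zY w by rewrite row_mxKl.
have gR w : rsubmx (g w) = const_mx (beta (zR w)) by rewrite row_mxKr.
have Db : forall z, disjoint_union_self X z -> X (lsubmx z) /\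
    ((rsubmx z ord0 ord0 = 0 /\ rsubmx z = 0) \/
     (rsubmx z ord0 ord0 = 1 /\ rsubmx z = const_mx 1)).
  by move=> z [Xz [h|h]]; split=> //; [left|right]; rewrite h mxE.
have inSW : forall w, (sphere 0 eps `&` W) w ->
    [/\ zU w = a, X (a^-1 *: zY w), a <= `|zR w| &
        zR w ^+ 2 = rho (a^-1 *: zY w)].
  move=> w [sw /memW [hB hQ]].
  have sw' : nrm2 (zY w) + zU w ^+ 2 + zR w ^+ 2 = a by rewrite -sumsplit.
  have hU : zU w = a by lra.
  have U0 : zU w != 0 by rewrite hU gt_eqF.
  have Xw : X (a^-1 *: zY w).
    apply/Xc => j; have := hQ j; rewrite evQ // hU.
    by move/eqP; rewrite !mulf_eq0 expf_eq0 (gt_eqF a0) andbF /= (gt_eqF he) !orbF => /eqP.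
  have eY : zY w = a *: (a^-1 *: zY w) by rewrite scalerA divff ?gt_eqF // scale1r.
  have hR2 : zR w ^+ 2 = rho (a^-1 *: zY w).
    have sw2 := sw'; rewrite {1}eY nrm2Z hU in sw2; rewrite /rho; lra.
  split => //.
  have : a ^+ 2 <= `|zR w| ^+ 2 by rewrite -normrX ger0_norm ?sqr_ge0 // hR2 rhoa.
  by rewrite ler_pXn2r // nnegrE ?normr_ge0 ?ltW.
exists f, g; split; first split.
+ move=> z /Db [Xz hb].
  have hr := sqa _ Xz.
  have hs : ((1 - 2 * rsubmx z ord0 ord0) * Num.sqrt (rho (lsubmx z))) ^+ 2 = rho (lsubmx z).
    rewrite exprMn sqr_sqrtr; last exact: le_trans (sqr_ge0 a) (rhoa _ Xz).
    by case: hb => [[-> _]|[-> _]]; ring.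
  split.
    rewrite /sphere /= sumsplit fY fU fR hs nrm2Z /rho /a; ring.
  apply/memW; split.
    by rewrite fY fU fR hs nrm2Z /rho; ring.
  move=> j; rewrite evQ fU ?gt_eqF // fY scalerA mulVf ?gt_eqF // scale1r.
  by rewrite ((Xc _).1 Xz j) mulr0 mul0r.
+ move=> w /inSW [hU Xw hR _].
  split; first by rewrite gL.
  rewrite gR; case: (leP 0 (zR w)) => h; [left | right]; apply/matrixP => i j; rewrite !mxE.
    by rewrite ((betaP _ hR).1 h).
  by rewrite ((betaP _ hR).2 h).
+ move=> z /Db [Xz hb].
  rewrite /g fY fR scalerA mulVf ?gt_eqF // scale1r.
  rewrite -[RHS]hsubmxK; congr row_mx.
  have hr := sqa _ Xz.
  case: hb => [[b0 hz]|[b1 hz]].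
    rewrite b0 hz; apply/matrixP => i j; rewrite !mxE.
    by rewrite mulr0 subr0 mul1r (betaP _ _).1 ?sqrtr_ge0 // ger0_norm ?sqrtr_ge0.
  rewrite b1 hz; apply/matrixP => i j; rewrite !mxE.
  have hn : (1 - 2 * 1) * Num.sqrt (rho (lsubmx z)) = - Num.sqrt (rho (lsubmx z)).
    by ring.
  rewrite hn (betaP _ _).2 //; first by rewrite normrN ger0_norm ?sqrtr_ge0.
  by rewrite oppr_lt0 (lt_le_trans a0 hr).
+ move=> w /inSW [hU Xw hR hR2].
  rewrite /f gL gR.
  rewrite -[RHS]hsubmxK -[lsubmx w]hsubmxK.
  congr (row_mx (row_mx _ _) _).
  * by rewrite scalerA divff ?gt_eqF // scale1r.
  * by apply/matrixP => i j; rewrite (ord1 i) (ord1 j) mxE -hU.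
  * apply/matrixP => i j; rewrite (ord1 i) (ord1 j) mxE [const_mx _ _ _]mxE.
    rewrite -hR2 sqrtr_sqr -/(zR w).
    case: (leP 0 (zR w)) => h.
      by rewrite ((betaP _ hR).1 h) mulr0 subr0 mul1r ger0_norm.
    rewrite ((betaP _ hR).2 h) ltr0_norm //; ring.
+ split; apply: continuous_subspaceT.
  * apply: cRow; first apply: cRow.
    - by apply: cScale; exact: continuous_lsubmx.
    - by apply: cConst; exact: cK.
    - apply: cConst; apply: cM.
        by apply: cD; [exact: cK | apply: cN; apply: cM; [exact: cK | apply: cCoord; exact: continuous_rsubmx]].
      apply: cS; rewrite /rho; apply: cD; first exact: cK.
      apply: cN; apply: cM; first exact: cK.
      by rewrite /nrm2; apply: cSum => i; apply: cX2; apply: cCoord; exact: continuous_lsubmx.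
  * apply: cRow.
    - apply: cScale; rewrite /zY => x.
      by apply: (@continuous_comp _ _ _ lsubmx lsubmx); apply: continuous_lsubmx.
    - apply: cConst; rewrite /beta; apply: cM; last exact: cK.
      apply: cD; first exact: cK.
      apply: cN; apply: cMax; first exact: cK.
      apply: cMin; first exact: cK.
      by apply: cM; [rewrite /zR; apply: cCoord; exact: continuous_rsubmx | exact: cK].
Qed.
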